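(* Fix a realization of the satellite positions such that $\tilde{\mathbf J}$ is nonsingular, fix $\rho>0$, and suppose $\eta=\kappa W_e^2$ for a constant $\kappa>0$ independent of the effective bandwidth $W_e>0$. Then, as $W_e\to\infty$, $\|\mathbf J^{-1}-\tilde{\mathbf J}^{-1}\|=o(W_e^{-2})$; consequently $\mathrm{CRB}_{xy}-\widetilde{\mathrm{CRB}}_{xy}=o(W_e^{-2})$ and $\mathrm{CRB}_z-\widetilde{\mathrm{CRB}}_z=o(W_e^{-2})$.
   Context: With satellites indexed $i=1,\dots,N$, distances $D_i>0$ to the receiver, local zenith angles $\phi_{L,i}$, azimuths $\theta_i$, visibility indicators $\mathbf 1_i$ (visible iff $\phi_{L,i}\le\phi_{L,\max}$), set $L_i=2\eta\rho/D_i^2$, $K_i=\frac{2\rho}{D_i^4}(1+\eta D_i^2)$, $u_i=(\sin\phi_{L,i}\cos\theta_i,\sin\phi_{L,i}\sin\theta_i,\cos\phi_{L,i})^T$. The RSS+TDOA Fisher information matrix is $\mathbf J=\sum_i\mathbf 1_i\begin{pmatrix}K_iu_iu_i^T & L_iu_i\\ L_iu_i^T & L_i\end{pmatrix}$ and the TDOA-only one is $\tilde{\mathbf J}=\sum_i\mathbf 1_iL_i\begin{pmatrix}u_iu_i^T & u_i\\ u_i^T&1\end{pmatrix}$ (parameters ordered $x,y,z,T_0$). $\mathrm{CRB}_{xy}=[\mathbf J^{-1}]_{11}+[\mathbf J^{-1}]_{22}$, $\mathrm{CRB}_z=[\mathbf J^{-1}]_{33}$, and analogously with tildes for $\tilde{\mathbf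 J}$. $\|\cdot\|$ is any matrix norm. *)

(* Defs.v *)
From HB Require Import structures.
From mathcomp Require Import all_boot all_order all_algebra.
From mathcomp Require Import all_classical all_reals all_analysis.
Set Implicit Arguments. Unset Strict Implicit. Unset Printing Implicit Defensive.
Import Order.TTheory GRing.Theory Num.Theory.
Import numFieldNormedType.Exports.
Local Open Scope ring_scope.

Section Fisher.
Variables (R : realType) (N : nat).
Variables (D phiL theta : 'I_N -> R) (phiLmax rho eta : R).

Definition visible (i : 'I_N) : bool := phiL i <= phiLmax.
Definition Lc (i : 'I_N) : R := 2 * eta * rho / (D i) ^+ 2.
Definition Kc (i : 'I_N) : R := 2 * rho / (D i) ^+ 4 * (1 + eta * (D i) ^+ 2).
Definition uvec (i : 'I_N) : 'cV[R]_3 :=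
  \col_(k < 3) [:: sin (phiL i) * cos (theta i);
                   sin (phiL i) * sin (theta i);
                   cos (phiL i)]`_k.

(* RSS+TDOA FIM, parameters ordered (x, y, z, T0) *)
Definition FIM : 'M[R]_(3 + 1) :=
  \sum_(i < N | visible i)
     block_mx (Kc i *: (uvec i *m (uvec i)^T)) (Lc i *: uvec i)
              (Lc i *: (uvec i)^T) (Lc i)%:M.

Definition FIMt : 'M[R]_(3 + 1) :=
  \sum_(i < N | visible i)
     Lc i *: block_mx (uvec i *m (uvec i)^T) (uvec i) ((uvec i)^T) 1%:M.
End Fisher.

Definition CRBxy (R : realType) (J : 'M[R]_(3 + 1)) : R :=
  invmx J (inord 0) (inord 0) + invmx J (inord 1) (inord 1).
Definition CRBz (R : realType) (J : 'M[R]_(3 + 1)) : R :=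
  invmx J (inord 2) (inord 2).

Definition is_mxnorm (R : realType) (nm : 'M[R]_(3 + 1) -> R) : Prop :=
  [/\ forall A B, nm (A + B) <= nm A + nm B,
      forall (a : R) A, nm (a *: A) = `|a| * nm A
    & forall A, nm A = 0 -> A = 0].

Definition pinfty_filter_on (R : realType) : filter_on R :=
  FilterType (pinfty_nbhs R) (@proper_pinfty_nbhs R).

(* Main.v *)
Require Import Defs.
From HB Require Import structures.
From mathcomp Require Import all_boot all_order all_algebra.
From mathcomp Require Import all_classical all_reals all_analysis.
From mathcomp Require Import ring lra.
Import Order.TTheory GRing.Theory Num.Theory.
Import numFieldNormedType.Exports.
Local Open Scope ring_scope.
Set Implicit Arguments. Unset Strict Implicit.

Section Sabs.
Variable R : realType.
Local Notation M := 'M[R]_(3 + 1).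

Definition sabs (X : M) : R := \sum_i \sum_j `|X i j|.

Lemma sabs_ge0 (X : M) : 0 <= sabs X.
Proof. by apply: sumr_ge0 => i _; apply: sumr_ge0 => j _. Qed.

Lemma sabs_entry (X : M) (i j : 'I_(3+1)) : `|X i j| <= sabs X.
Proof.
rewrite /sabs (bigD1 i) //= (bigD1 j) //= -addrA lerDl.
apply: addr_ge0; first by apply: sumr_ge0.
by apply: sumr_ge0 => k _; apply: sumr_ge0.
Qed.

Lemma sabs_add (X Y : M) : sabs (X + Y) <= sabs X + sabs Y.
Proof.
rewrite /sabs -big_split /=; apply: ler_sum => i _.
rewrite -big_split /=; apply: ler_sum => j _; rewrite mxE; exact: ler_normD.
Qed.

Lemma sabs_opp (X : M) : sabs (- X) = sabs X.
Proof. by apply: eq_bigr => i _; apply: eq_bigr => j _; rewrite mxE normrN. Qed.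

Lemma sabs_scale (a : R) (X : M) : sabs (a *: X) = `|a| * sabs X.
Proof.
rewrite /sabs mulr_sumr; apply: eq_bigr => i _; rewrite mulr_sumr.
by apply: eq_bigr => j _; rewrite mxE normrM.
Qed.

Lemma sabs_mul (X Y : M) : sabs (X *m Y) <= sabs X * sabs Y.
Proof.
rewrite /sabs mulr_suml; apply: ler_sum => i _; rewrite mulr_suml.
apply: (@le_trans _ _ (\sum_j \sum_k `|X i k| * `|Y k j|)).
  apply: ler_sum => j _; rewrite mxE.
  apply: (le_trans (ler_norm_sum _ _ _)).
  by apply: ler_sum => k _; rewrite normrM.
rewrite exchange_big /=; apply: ler_sum => k _; rewrite -mulr_sumr.
apply: ler_wpM2l => //.
rewrite [leRHS](bigD1 k) //= lerDl; apply: sumr_ge0 => l _; apply: sumr_ge0 => ? _ //.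
Qed.

Lemma sabs_eq0 (X : M) : sabs X <= 0 -> X = 0.
Proof.
move=> H; apply/matrixP => i j; rewrite mxE; apply/normr0_eq0.
apply: le_anti; rewrite normr_ge0 andbT; exact: le_trans (sabs_entry X i j) H.
Qed.

Lemma key (Jt Dl : M) : Jt \in unitmx ->
  sabs (invmx Jt) * sabs Dl <= 1/2 ->
  (Jt + Dl) \in unitmx /\
  sabs (invmx (Jt + Dl) - invmx Jt) <= 2 * sabs Dl * sabs (invmx Jt) ^+ 2.
Proof.
move=> Ju Hs.
set Xt := invmx Jt.
have HXt : Jt *m Xt = 1%:M by rewrite mulmxV.
have Ju2 : (Jt + Dl) \in unitmx.
  rewrite -row_free_unit -kermx_eq0; apply/eqP.
  set K := kermx (Jt + Dl).
  have HK : K *m (Jt + Dl) = 0 by rewrite mulmx_ker.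
  have HK2 : K = - (K *m Dl *m Xt).
    rewrite mulmxDr in HK.
    have : K *m Jt *m Xt = - (K *m Dl) *m Xt.
      by move/eqP: HK; rewrite addr_eq0 => /eqP ->.
    by rewrite -mulmxA HXt mulmx1 mulNmx.
  apply: sabs_eq0.
  have H1 : sabs K <= sabs K * sabs Dl * sabs Xt.
    rewrite {1}HK2 sabs_opp.
    apply: (le_trans (sabs_mul _ _)); apply: ler_wpM2r; first exact: sabs_ge0.
    exact: sabs_mul.
  have H0 := sabs_ge0 K.
  have : sabs K * sabs Dl * sabs Xt <= sabs K / 2.
    by rewrite -mulrA [sabs Dl * _]mulrC; apply: ler_wpM2l => //; rewrite div1r in Hs.
  nra.
split => //.
set X := invmx (Jt + Dl).
have HX : X *m (Jt + Dl) = 1%:M by rewrite mulVmx.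
have Hd : X - Xt = - (X *m Dl *m Xt).
  have : X *m (Jt + Dl) *m Xt = Xt by rewrite HX mul1mx.
  rewrite mulmxDr mulmxDl -(mulmxA X Jt) HXt mulmx1 => E.
  by rewrite -{1}E opprD addrA subrr add0r.
have HX2 : sabs X <= sabs Xt + sabs X * sabs Dl * sabs Xt.
  rewrite {1}(_ : X = Xt + (X - Xt)); last by rewrite addrC subrK.
  rewrite Hd.
  apply: (le_trans (sabs_add _ _)); apply: lerD => //.
  rewrite sabs_opp; apply: (le_trans (sabs_mul _ _)); apply: ler_wpM2r;
    [exact: sabs_ge0| exact: sabs_mul].
have H3 : sabs (X - Xt) <= sabs X * sabs Dl * sabs Xt.
  rewrite Hd sabs_opp; apply: (le_trans (sabs_mul _ _)); apply: ler_wpM2r;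
    [exact: sabs_ge0| exact: sabs_mul].
have h0 := sabs_ge0 X; have h1 := sabs_ge0 Dl; have h2 := sabs_ge0 Xt.
rewrite div1r in Hs.
have H4 : sabs X * sabs Dl * sabs Xt <= sabs X * 2^-1.
  by rewrite -mulrA [sabs Dl * _]mulrC; apply: ler_wpM2l.
have HXb : sabs X <= 2 * sabs Xt by lra.
apply: (le_trans H3).
apply: (@le_trans _ _ (2 * sabs Xt * sabs Dl * sabs Xt)).
  by apply: ler_wpM2r => //; apply: ler_wpM2r.
by rewrite expr2 le_eqVlt; apply/orP; left; apply/eqP; ring.
Qed.

Lemma nm_bound (nm : M -> R) : is_mxnorm nm ->
  exists C, 0 <= C /\ (forall X, 0 <= nm X) /\ forall X, nm X <= C * sabs X.
Proof.
case=> Htri Hsc H0.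
have nm0 : nm 0 = 0 by rewrite -(scale0r (0 : M)) Hsc normr0 mul0r.
have nmge0 : forall A, 0 <= nm A.
  move=> A; have := Htri A (- A); rewrite subrr nm0 -scaleN1r Hsc normrN normr1 mul1r.
  lra.
have nmsum : forall (I : Type) (r : seq I) (F : I -> M),
    nm (\sum_(i <- r) F i) <= \sum_(i <- r) nm (F i).
  move=> I r F; elim: r => [|a r IH]; first by rewrite !big_nil nm0.
  rewrite !big_cons; apply: (le_trans (Htri _ _)); exact: lerD.
exists (\sum_i \sum_j nm (delta_mx i j : M)); split.
  by apply: sumr_ge0 => i _; apply: sumr_ge0 => j _.
split=> //.
move=> X; rewrite {1}(matrix_sum_delta X).
apply: (le_trans (nmsum _ _ _)); rewrite mulr_sumr; apply: ler_sum => i _.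
apply: (le_trans (nmsum _ _ _)); rewrite mulr_sumr; apply: ler_sum => j _.
rewrite Hsc mulrC; apply: ler_wpM2r => //.
rewrite [leRHS](bigD1 i) //= [X in _ <= X + _](bigD1 j) //= -addrA lerDl.
apply: addr_ge0; first by apply: sumr_ge0.
by apply: sumr_ge0 => k _; apply: sumr_ge0.
Qed.

Lemma littleo_W (f : R -> R) (C W0 : R) : 1 <= W0 -> 0 <= C ->
  (forall W, W0 < W -> `|f W| <= C * W ^- 4) ->
  f =o_ (pinfty_filter_on R) (fun W : R => W ^- 2).
Proof.
move=> HW0 HC Hf; apply/eqoP => e e0.
exists (W0 + C / e); split; first by rewrite realE; apply/orP; left; 
  apply: addr_ge0; [lra| exact: divr_ge0 (ltW e0)].
move=> x Hx.
have Ce : 0 <= C / e by exact: divr_ge0 (ltW e0).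
have x1 : 1 < x by lra.
have x0 : 0 < x by lra.
apply: (le_trans (Hf x _)); first lra.
have -> : x ^- 4 = x ^- 2 * x ^- 2 by rewrite -invfM -exprD.
have xi : 0 < x ^- 2 by rewrite invr_gt0 exprn_gt0.
rewrite (ger0_norm (ltW xi)).
rewrite mulrA; apply: ler_wpM2r; first exact: ltW.
rewrite ler_pdivrMr ?exprn_gt0 //.
have : C / e < x by lra.
rewrite ltr_pdivrMr // => Hl.
have : x <= x ^+ 2 by rewrite expr2 ler_peMl //; lra.
move=> Hx2; nra.
Qed.
End Sabs.

Lemma FIM_split (R : realType) (N : nat) (D phiL theta : 'I_N -> R)
  (phiLmax rho eta : R) : (forall i, 0 < D i) ->
  FIM D phiL theta phiLmax rho eta =
  FIMt D phiL theta phiLmax rho eta + FIM D phiL theta phiLmax rho 0.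
Proof.
move=> HD; rewrite /FIM /FIMt -big_split /=; apply: eq_bigr => i _.
rewrite scale_block_mx add_block_mx /Kc /Lc !mul0r !mulr0 !mul0r !scale0r !addr0 scalemx1.
have Hn : D i != 0 by rewrite gt_eqF // HD.
congr block_mx; apply/matrixP => a b; rewrite !mxE.
  by field; rewrite ?expf_neq0.
by rewrite mul0rn addr0.
Qed.

Lemma FIMt_scale (R : realType) (N : nat) (D phiL theta : 'I_N -> R)
  (phiLmax rho kappa W : R) :
  FIMt D phiL theta phiLmax rho (kappa * W ^+ 2) =
  W ^+ 2 *: FIMt D phiL theta phiLmax rho kappa.
Proof.
rewrite /FIMt scaler_sumr; apply: eq_bigr => i _; rewrite scalerA /Lc; congr (_ *: _).
by ring.
Qed.

Unset Implicit Arguments.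
Theorem mainTheorem4 (R : realType) (N : nat)
  (D phiL theta : 'I_N -> R) (phiLmax rho kappa : R) :
  (forall i, 0 < D i) -> 0 < rho -> 0 < kappa ->
  (forall We : R, 0 < We ->
     FIMt D phiL theta phiLmax rho (kappa * We ^+ 2) \in unitmx) ->
  (forall nm : 'M[R]_(3 + 1) -> R, is_mxnorm nm ->
     (fun We : R => nm (invmx (FIM D phiL theta phiLmax rho (kappa * We ^+ 2))
                        - invmx (FIMt D phiL theta phiLmax rho (kappa * We ^+ 2))))
       =o_ (pinfty_filter_on R) (fun We : R => We ^- 2))
  /\ (fun We : R => CRBxy (FIM D phiL theta phiLmax rho (kappa * We ^+ 2))
                    - CRBxy (FIMt D phiL theta phiLmax rho (kappa * We ^+ 2)))
       =o_ (pinfty_filter_on R) (fun We : R => We ^- 2)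
  /\ (fun We : R => CRBz (FIM D phiL theta phiLmax rho (kappa * We ^+ 2))
                    - CRBz (FIMt D phiL theta phiLmax rho (kappa * We ^+ 2)))
       =o_ (pinfty_filter_on R) (fun We : R => We ^- 2).
Proof.
move=> HD Hr Hk Hu.
set A0 := FIMt D phiL theta phiLmax rho kappa.
set Dl := FIM D phiL theta phiLmax rho 0.
have HA0 : A0 \in unitmx.
  by have := Hu 1 ltr01; rewrite expr1n mulr1.
set c := sabs (invmx A0).
set d := sabs Dl.
have c0 : 0 <= c by exact: sabs_ge0.
have d0 : 0 <= d by exact: sabs_ge0.
set MW := fun W : R => invmx (FIM D phiL theta phiLmax rho (kappa * W ^+ 2))
                  - invmx (FIMt D phiL theta phiLmax rho (kappa * W ^+ 2)).
have W01 : 1 <= 2 * c * d + 1 by have := mulr_ge0 c0 d0; lra.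
have Hb : forall W, 2 * c * d + 1 < W -> sabs (MW W) <= (2 * d * c ^+ 2) * W ^- 4.
  move=> W HW.
  have W0 : 0 < W by lra.
  have Hut := Hu W W0.
  rewrite FIMt_scale in Hut.
  have Hinv : invmx (FIMt D phiL theta phiLmax rho (kappa * W ^+ 2)) = W ^- 2 *: invmx A0.
    by rewrite FIMt_scale invmxZ.
  have Hsx : sabs (invmx (FIMt D phiL theta phiLmax rho (kappa * W ^+ 2))) = W ^- 2 * c.
    by rewrite Hinv sabs_scale ger0_norm // invr_ge0 exprn_ge0 // ltW.
  have Hsm : sabs (invmx (FIMt D phiL theta phiLmax rho (kappa * W ^+ 2))) * d <= 1/2.
    rewrite Hsx.
    have HW2 : W <= W ^+ 2 by rewrite expr2 ler_peMl //; lra.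
    rewrite -mulrA ler_pdivrMl ?exprn_gt0 //.
    have : c * d <= W / 2 by lra.
    move=> H; apply: (le_trans H); rewrite div1r.
    apply: ler_wpM2r; [lra|lra].
  have [_ Hk2] := key (Dl := Dl) (Hu W W0) Hsm.
  rewrite /MW FIM_split //; apply: (le_trans Hk2).
  rewrite Hsx le_eqVlt; apply/orP; left; apply/eqP.
  have Wn : W != 0 by rewrite gt_eqF.
  by rewrite /d; field.
split.
  move=> nm Hnm.
  have [C [C0 [Hnn HC]]] := nm_bound Hnm.
  apply: (@littleo_W _ _ (C * (2 * d * c ^+ 2)) (2 * c * d + 1)) => //.
    by apply: mulr_ge0 => //; apply: mulr_ge0 => //; apply: mulr_ge0.
  move=> W HW; rewrite ger0_norm // -[C * _ * _]mulrA.
  apply: (le_trans (HC _)); apply: ler_wpM2l => //; exact: Hb.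
split.
  apply: (@littleo_W _ _ (2 * (2 * d * c ^+ 2)) (2 * c * d + 1)) => //.
    by apply: mulr_ge0 => //; apply: mulr_ge0 => //; apply: mulr_ge0.
  move=> W HW.
  have E : CRBxy (FIM D phiL theta phiLmax rho (kappa * W ^+ 2)) -
     CRBxy (FIMt D phiL theta phiLmax rho (kappa * W ^+ 2)) =
     MW W (inord 0) (inord 0) + MW W (inord 1) (inord 1).
    rewrite /MW /CRBxy !mxE; ring.
  rewrite E; apply: (le_trans (ler_normD _ _)).
  have := sabs_entry (MW W) (inord 0) (inord 0).
  have := sabs_entry (MW W) (inord 1) (inord 1).
  have := Hb W HW; lra.
apply: (@littleo_W _ _ (2 * d * c ^+ 2) (2 * c * d + 1)) => //.
  by apply: mulr_ge0 => //; apply: mulr_ge0.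
move=> W HW.
have E : CRBz (FIM D phiL theta phiLmax rho (kappa * W ^+ 2)) -
   CRBz (FIMt D phiL theta phiLmax rho (kappa * W ^+ 2)) =
   MW W (inord 2) (inord 2) by rewrite /MW /CRBz !mxE.
rewrite E; apply: (le_trans (sabs_entry _ _ _)); exact: Hb.
Qed.
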